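(* Let $p$ be a prime and let $G$ be a group of order $p^7$ and nilpotency class $4$ with $|\gamma_2(G)| = p^5$. Then $\gamma_2(G)$ is abelian.
   Context: $\gamma_2(G)$ denotes the commutator subgroup of $G$. *)

(* Defs.v *)
From mathcomp Require Import all_boot all_fingroup all_solvable.

(* Main.v *)
Require Import Defs.
From mathcomp Require Import all_boot all_fingroup all_solvable.

Set Implicit Arguments.
Unset Strict Implicit.
Unset Printing Implicit Defensive.

Local Open Scope group_scope.

Theorem lemma2p10 (gT : finGroupType) (G : {group gT}) (p : nat) :
  prime p -> #|G| = (p ^ 7)%N -> nil_class G = 4%N ->
  #|[~: G, G]| = (p ^ 5)%N ->
  abelian [~: G, G].
Proof.
move=> pr_p oG clG oG'.
have pG : p.-group G by rewrite /pgroup oG pnatX pnat_id.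
have nilG := pgroup_nil pG.
have L5 : 'L_5(G) = 1 by apply/(lcn_nil_classP 4 nilG); rewrite clG.
have cL : [~: G^`(1), 'L_3(G)] = 1.
  apply: (three_subgroup (G:=G) (H:='L_3(G)) (K:=G)).
    by rewrite (commGC G); exact: L5.
  exact: L5.
have sL3Z : 'L_3(G) \subset 'Z(G^`(1)).
  rewrite subsetI (@lcn_sub_leq _ 3 2 G) //=.
  by rewrite centsC; apply/commG1P.
have nL3G : G \subset 'N('L_3(G)) := lcn_norm 3 G.
apply: (cyclic_factor_abelian sL3Z).
set K := G^`(1).
have nKG : G \subset 'N(K) := der_norm 1 G.
have sKG : K \subset G := der_sub 1 G.
have oQ : #|G / K| = (p ^ 2)%N.
  rewrite card_quotient // -divgS // oG oG'.
  have p5 : (0 < p ^ 5)%N by rewrite expn_gt0 prime_gt0.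
  by rewrite (_ : 7 = 2 + 5)%N // expnD mulnK.
have ncQ : forall u, u \in G / K -> <[u]> != G / K.
  move=> u _; apply/eqP=> defQ.
  have cG : cyclic G.
    by apply: cyclic_nilpotent_quo_der1_cyclic => //; rewrite -defQ cycle_cyclic.
  by move: (cyclic_abelian cG); rewrite -nil_class1 clG.
have ntQ : G / K != 1.
  apply/eqP=> Q1; move: oQ; rewrite Q1 cards1 => /eqP.
  by rewrite eq_sym -(expn0 p) eqn_exp2l ?prime_gt1.
have [u Qu ntu] := trivgPn _ ntQ.
have sUQ : <[u]> \subset G / K by rewrite cycle_subG.
have pUQ : <[u]> \proper G / K by rewrite properEneq sUQ ncQ.
have [_ [v Qv nUv]] := properP pUQ.
set J := <[u]> <*> <[v]>.
have sJQ : J \subset G / K by rewrite join_subG sUQ cycle_subG.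
have pUJ : <[u]> \proper J.
  apply/properP; split; first exact: joing_subl.
  by exists v => //; rewrite mem_gen // inE cycle_id orbT.
have defJ : J = G / K.
  apply/eqP; rewrite eqEcard sJQ oQ.
  have d1 : (#|<[u]>| %| p ^ 2)%N by rewrite -oQ cardSg.
  have d2 : (#|J| %| p ^ 2)%N by rewrite -oQ cardSg.
  have l1 : (1 < #|<[u]>|)%N by rewrite cardG_gt1 cycle_eq1.
  have l2 := proper_card pUJ.
  case/(dvdn_pfactor _ _ pr_p): d1 l1 l2 => a a2 ->.
  case/(dvdn_pfactor _ _ pr_p): d2 => b b2 ->.
  move=> l1 l2.
  have p1 := prime_gt1 pr_p.
  rewrite leq_exp2l //.
  rewrite ltn_exp2l // in l2.
  rewrite -{1}(expn0 p) ltn_exp2l // in l1.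
  exact: leq_ltn_trans l1 l2.
case/morphimP: Qu => x Nx Gx defu.
case/morphimP: Qv => y Ny Gy defv.
set XY := <[x]> <*> <[y]>.
have sXYG : XY \subset G by rewrite join_subG !cycle_subG Gx Gy.
have nXYK : XY \subset 'N(K) := subset_trans sXYG nKG.
have XYK : XY / K = G / K.
  by rewrite /XY quotientY ?cycle_subG // !quotient_cycle // -defu -defv.
have defXY : XY = G.
  suff <- : <<XY>> = G by rewrite genGid.
  apply: Phi_nongen; apply/eqP; rewrite eqEsubset join_subG Phi_sub sXYG /=.
  have : G \subset K * XY by rewrite -quotientSK // XYK.
  move/subset_trans; apply; apply: mul_subG; last exact: joing_subr.
  by rewrite (Phi_joing pG) (subset_trans (joing_subl _ _) (joing_subl _ _)).
set L := 'L_3(G).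
have nxL : x \in 'N(L) := subsetP nL3G x Gx.
have nyL : y \in 'N(L) := subsetP nL3G y Gy.
have QG : <[coset L x]> <*> <[coset L y]> = G / L.
  by rewrite -!quotient_cycle // -quotientY ?cycle_subG // -/XY defXY.
have cQ : [~ coset L x, coset L y] \in 'C(<[coset L x]> <*> <[coset L y]>).
  rewrite QG.
  have : [~ coset L x, coset L y] \in (G / L)^`(1).
    by rewrite mem_commg // mem_quotient.
  rewrite -quotient_der //.
  move/(subsetP (lcn_central 2 G)); rewrite /L.
  by case/setIP.
rewrite /K (quotient_der 1 nL3G) -QG (der1_joing_cycles cQ).
exact: cycle_cyclic.
Qed.
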